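(* If $(\lambda_*,z_* )$ is a minimizer of QEPmin, then $\lambda_*$ is the leftmost eigenvalue (the one of smallest real part) of the quadratic eigenvalue problem $(PAP-\lambda I)^2z=\gamma^{-2}b_0b_0^{\top}z$ among those eigenvalues having eigenvectors in $\mathcal N(C^{\top})$.
   Context: Let $A\in\mathbb{R}^{n\times n}$ be symmetric, $C\in\mathbb{R}^{n\times m}$ ($m<n$) full column rank, $b\in\mathbb{R}^m$, $n_0=C(C^{\top}C)^{-1}b$ with $\|n_0\|<1$, $\gamma=\sqrt{1-\|n_0\|^2}$, $P=I-C(C^{\top}C)^{-1}C^{\top}$ (orthogonal projector onto $\mathcal N(C^{\top})$), $b_0=PAn_0$, assumed nonzero. An eigenvalue of the QEP is $\lambda\in\mathbb{C}$ for which a nonzero (complex) vector $z$ satisfies the equation; $z$ is then an eigenvector. QEPmin: minimize $\lambda$ over pairs $(\lambda,z)$ with $\lambda\in\mathbb{R}$, $0\neq z\in\mathcal N(C^{\top})$ and $(PAP-\lambda I)^2z=\gamma^{-2}b_0b_0^{\top}z$. *)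

(* Defs.v *)
From HB Require Import structures.
From mathcomp Require Import all_boot all_order all_algebra.
From mathcomp Require Import complex.
Set Implicit Arguments. Unset Strict Implicit. Unset Printing Implicit Defensive.
Import Order.TTheory GRing.Theory Num.Theory.
Local Open Scope ring_scope.

Section QEP.
Variables (R : rcfType) (n m : nat).
Variables (A : 'M[R]_n) (C : 'M[R]_(n, m)) (b : 'cV[R]_m).

Definition n0 : 'cV[R]_n := C *m invmx (C^T *m C) *m b.
Definition sqnorm (v : 'cV[R]_n) : R := (v^T *m v) 0 0.
Definition gamma : R := Num.sqrt (1 - sqnorm n0).
Definition Pmx : 'M[R]_n := 1%:M - C *m invmx (C^T *m C) *m C^T.
Definition b0 : 'cV[R]_n := Pmx *m A *m n0.

Definition QEPmx (lam : R) : 'M[R]_n :=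
  let M := Pmx *m A *m Pmx - lam%:M in
  M *m M - (gamma ^- 2) *: (b0 *m b0^T).

Definition cplx := real_complex R.
Definition QEPmxC (lam : R[i]) : 'M[R[i]]_n :=
  let M := map_mx cplx (Pmx *m A *m Pmx) - lam%:M in
  M *m M - (cplx gamma ^- 2) *: map_mx cplx (b0 *m b0^T).

Definition QEPmin_feasible (lam : R) (z : 'cV[R]_n) : Prop :=
  [/\ z != 0, C^T *m z = 0 & QEPmx lam *m z = 0].

Definition QEPmin_minimizer (lam : R) (z : 'cV[R]_n) : Prop :=
  QEPmin_feasible lam z /\
  forall lam' z', QEPmin_feasible lam' z' -> lam <= lam'.

Definition QEP_eig_in_ker (mu : R[i]) : Prop :=
  exists z : 'cV[R[i]]_n,
    [/\ z != 0, map_mx cplx C^T *m z = 0 & QEPmxC mu *m z = 0].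
End QEP.

(* Main.v *)
Require Import Defs.
From HB Require Import structures.
From mathcomp Require Import all_boot all_order all_algebra.
From mathcomp Require Import complex.
Import Order.TTheory GRing.Theory Num.Theory.
Local Open Scope ring_scope.

From mathcomp Require Import sesquilinear spectral.
From mathcomp Require Import ring lra.
Section S.
Variable R : rcfType.

Lemma sqnorm0 k (x : 'cV[R]_k) : (x^T *m x) 0 0 = 0 -> x = 0.
Proof.
rewrite mxE => H; apply/matrixP => i j; rewrite ord1 mxE.
have : \sum_(l < k) x l 0 ^+ 2 = 0.
  by rewrite -[RHS]H; apply: eq_bigr => l _; rewrite mxE expr2.
move/psumr_eq0P => /(_ (fun l _ => sqr_ge0 (x l 0))) /(_ i isT) /eqP.
by rewrite sqrf_eq0 => /eqP.
Qed.

Lemma sqnorm_ge0 k (x : 'cV[R]_k) : 0 <= (x^T *m x) 0 0.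
Proof. by rewrite mxE; apply: sumr_ge0 => l _; rewrite mxE -expr2 sqr_ge0. Qed.

Variables (n m : nat) (A : 'M[R]_n) (C : 'M[R]_(n, m)) (b : 'cV[R]_m).
Hypothesis hA : A^T = A.
Hypothesis hC : \rank C = m.

Lemma CtC_unit : C^T *m C \in unitmx.
Proof.
rewrite -row_free_unit; apply: inj_row_free => v H.
have H1 : (C *m v^T) = 0.
  apply: sqnorm0; rewrite trmx_mul trmxK mulmxA -(mulmxA v) H mul0mx mxE //.
have : v *m C^T = 0 by rewrite -(trmxK (v *m C^T)) trmx_mul trmxK H1 trmx0.
move/eqP; rewrite mulmx_free_eq0; first by move/eqP.
by rewrite /row_free mxrank_tr hC.

Qed.

Arguments Pmx : simpl never.
Local Notation P := (Pmx C).
Local Notation X := (invmx (C^T *m C)).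

Lemma X_sym : X^T = X.
Proof. by rewrite trmx_inv trmx_mul trmxK. Qed.

Lemma P_sym : P^T = P.
Proof. by rewrite /Pmx linearB /= trmx1 !trmx_mul trmxK X_sym mulmxA. Qed.

Lemma CtP : C^T *m P = 0.
Proof.
by rewrite /Pmx mulmxBr mulmx1 !mulmxA mulmxV ?CtC_unit // mul1mx subrr.
Qed.

Lemma PC : P *m C = 0.
Proof.
by rewrite /Pmx mulmxBl mul1mx -!mulmxA mulVmx ?CtC_unit // mulmx1 subrr.
Qed.

Lemma PP : P *m P = P.
Proof.
by rewrite {1}/Pmx mulmxBl mul1mx -!mulmxA CtP !mulmx0 subr0.
Qed.

Lemma P_ker k (z : 'M[R]_(n,k)) : C^T *m z = 0 -> P *m z = z.
Proof. by move=> h; rewrite /Pmx mulmxBl mul1mx -!mulmxA h !mulmx0 subr0. Qed.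

Lemma ker_P k (z : 'M[R]_(n,k)) : P *m z = z -> C^T *m z = 0.
Proof. by move=> <-; rewrite mulmxA CtP mul0mx. Qed.



Local Notation gam := (gamma C b).

Lemma gamma_gt0 : sqnorm (n0 C b) < 1 -> 0 < gam.
Proof. by move=> h; rewrite /gamma sqrtr_gt0 subr_gt0. Qed.

Lemma Pb0 : P *m b0 A C b = b0 A C b.
Proof. by rewrite /b0 !mulmxA PP. Qed.

Lemma gg_eq : gam ^- 2 *: (b0 A C b *m (b0 A C b)^T) =
   (gam^-1 *: b0 A C b) *m (gam^-1 *: b0 A C b)^T.
Proof.
by rewrite linearZ /= -scalemxAl -scalemxAr scalerA -exprVn expr2.
Qed.

End S.

Section T.
Variable R : rcfType.
Variables (n : nat) (A P : 'M[R]_n) (g : 'cV[R]_n).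
Hypothesis hA : A^T = A.
Hypothesis hPs : P^T = P.
Hypothesis hPP : P *m P = P.
Hypothesis hPg : P *m g = g.

Definition S := P *m A *m P.
Definition Qm t := (S - t%:M) *m (S - t%:M) - g *m g^T.

Lemma S_sym : S^T = S.
Proof. by rewrite /S !trmx_mul hPs hA mulmxA. Qed.

Lemma PS : P *m S = S.
Proof. by rewrite /S !mulmxA hPP. Qed.

Lemma SP : S *m P = S.
Proof. by rewrite /S -mulmxA hPP. Qed.

Definition Sp (N : R) := S + N *: (1%:M - P).
Definition Hp (N t : R) := (Sp N - t%:M) *m (Sp N - t%:M) - g *m g^T.

Lemma Sp_sym N : (Sp N)^T = Sp N.
Proof.
have T1 : (1%:M - P)^T = 1%:M - P by rewrite linearB /= trmx1 hPs.
by rewrite /Sp linearD /= S_sym linearZ /= T1.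
Qed.

Lemma SpW N k (y : 'M[R]_(n,k)) : P *m y = y -> Sp N *m y = S *m y.
Proof.
by move=> h; rewrite /Sp mulmxDl -scalemxAl mulmxBl mul1mx h subrr scaler0 addr0.
Qed.

Lemma SpW2 N t k (y : 'M[R]_(n,k)) : P *m y = y -> (Sp N - t%:M) *m y = (S - t%:M) *m y.
Proof. by move=> h; rewrite !mulmxBl SpW. Qed.

Lemma PSt t k (y : 'M[R]_(n,k)) : P *m y = y -> P *m ((S - t%:M) *m y) = (S - t%:M) *m y.
Proof.
move=> h; rewrite mulmxA mulmxBr PS mul_mx_scalar mulmxBl -scalemxAl h.
by rewrite mulmxBl mul_scalar_mx.
Qed.

Lemma HpW N t k (x : 'M[R]_(n,k)) : P *m x = x -> Hp N t *m x = Qm t *m x.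
Proof.
move=> h; rewrite /Qm /Hp (mulmxBl ((Sp N - t%:M) *m (Sp N - t%:M))).
rewrite (mulmxBl ((S - t%:M) *m (S - t%:M))); congr (_ - _).
by rewrite -(mulmxA (Sp N - t%:M)) (@SpW2 N t _ _ h) SpW2 ?PSt // -mulmxA.
Qed.

Lemma Hp_ker N t k (x : 'M[R]_(n,k)) : t != N -> Hp N t *m x = 0 -> P *m x = x.
Proof.
move=> tN h.
have e1 : (1%:M - P) *m (Sp N - t%:M) = (N - t) *: (1%:M - P).
  rewrite /Sp mulmxBr mulmxDr mulmxBl mul1mx PS subrr add0r -scalemxAr.
  rewrite mulmxBr mulmx1 mulmxBl mul1mx hPP subrr subr0 mul_mx_scalar.
  by rewrite scalerBl.
have e2 : (1%:M - P) *m g = 0 by rewrite mulmxBl mul1mx hPg subrr.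
have : (1%:M - P) *m (Hp N t *m x) = 0 by rewrite h mulmx0.
rewrite /Hp mulmxA mulmxBr mulmxA e1 mulmxA e2 mul0mx subr0 -scalemxAl.
rewrite e1 -!scalemxAl scalerA.
move/eqP; rewrite scalemx_eq0 mulf_eq0 subr_eq0 eq_sym (negPf tN) orbb /=.
by rewrite mulmxBl mul1mx subr_eq0 => /eqP.
Qed.

End T.

Section S4.
Variable R : rcfType.
Local Notation cp := (real_complex R).

Lemma Re_sum (I : finType) (F : I -> R[i]) : complex.Re (\sum_i F i) = \sum_i complex.Re (F i).
Proof. by apply: (big_morph (@complex.Re R)) => // [[x1 x2] [y1 y2]]. Qed.
Lemma Im_sum (I : finType) (F : I -> R[i]) : complex.Im (\sum_i F i) = \sum_i complex.Im (F i).
Proof. by apply: (big_morph (@complex.Im R)) => // [[x1 x2] [y1 y2]]. Qed.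

Lemma real_kernel (p q : nat) (Q : 'M[R]_(p,q)) (v : 'cV[R[i]]_q) :
  v != 0 -> map_mx cp Q *m v = 0 -> exists2 x : 'cV[R]_q, x != 0 & Q *m x = 0.
Proof.
move=> v0 Qv.
pose xr := map_mx (@complex.Re R) v; pose xi := map_mx (@complex.Im R) v.
have Hr : Q *m xr = 0.
  apply/matrixP=> i j; have := congr1 (@complex.Re R) (congr1 (fun M : 'M[R[i]]_(p,1) => M i j) Qv).
  rewrite /= !mxE Re_sum => H; rewrite [RHS](_ : 0 = complex.Re (0:R[i])) // -H.
  apply: eq_bigr => k _; rewrite !mxE.
  by case: (v k j) => a b /=; rewrite !mul0r subr0.
have Hi : Q *m xi = 0.
  apply/matrixP=> i j; have := congr1 (@complex.Im R) (congr1 (fun M : 'M[R[i]]_(p,1) => M i j) Qv).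
  rewrite /= !mxE Im_sum => H; rewrite [RHS](_ : 0 = complex.Im (0:R[i])) // -H.
  apply: eq_bigr => k _; rewrite !mxE.
  by case: (v k j) => a b /=; rewrite !mul0r addr0.
case: (eqVneq xr 0) => [xr0|]; last by move=> h; exists xr.
case: (eqVneq xi 0) => [xi0|]; last by move=> h; exists xi.
exfalso; move/eqP: v0; apply; apply/matrixP => i j.
move/matrixP: xr0 => /(_ i j); move/matrixP: xi0 => /(_ i j); rewrite !mxE.
by case: (v i j) => a b /= -> ->.
Qed.
Lemma normc_sum (I : finType) (F : I -> R[i]) :
  Normc.normc (\sum_i F i) <= \sum_i Normc.normc (F i).
Proof.
apply: (big_ind2 (fun x y => Normc.normc x <= y)) => //.
- by rewrite Normc.normc0.
- by move=> x1 x2 y1 y2 h1 h2; apply: le_trans (le_normcD _ _) (lerD h1 h2).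
Qed.

Lemma normc_term (w d a b : R) : 0 <= w ->
  Normc.normc ((cp w) / ((cp d - (a +i* b)%C)^+2)) = w / ((d - a)^+2 + b^+2).
Proof.
move=> w0; rewrite Normc.normcM Normc.normcV expr2 Normc.normcM /=.
rewrite expr0n /= addr0 sqrtr_sqr ger0_norm //; congr (_ / _).
rewrite -expr2 sqr_sqrtr ?addr_ge0 ?sqr_ge0 //.
by rewrite add0r sqrrN.
Qed.

Lemma sqr_pos (x : R) : x != 0 -> 0 < x ^+ 2.
Proof. by move=> h; rewrite exprn_even_gt0 //= h. Qed.

Lemma secular (k : nat) (d nw : 'I_k -> R) (a b : R) :
  (forall i, 0 <= nw i) -> (exists i, nw i != 0) -> b != 0 ->
  \sum_i cp (nw i) / (cp (d i) - (a +i* b)%C)^+2 = 1 ->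
  exists t, t <= a /\ (forall i, nw i != 0 -> t < d i) /\
            \sum_i nw i / (d i - t)^+2 = 1.
Proof.
move=> nw0 [i0 hi0] b0 hsum.
pose f t := \sum_i nw i / (d i - t)^+2.
have [t1 [t1a [t1d f1]]] : exists t1, t1 <= a /\ (forall i, nw i != 0 -> t1 < d i)
                                      /\ 1 < f t1.
  case: (boolP [forall i, (nw i != 0) ==> (a < d i)]) => [/forallP H | /forallPn [i1]].
  - have Hd : forall i, nw i != 0 -> a < d i by move=> i hi; have := H i; rewrite hi.
    exists a; split => //; split => //.
    have h1 : 1 <= \sum_i nw i / ((d i - a)^+2 + b^+2).
      rewrite -(Normc.normc1 R) -hsum.
      apply: le_trans (normc_sum _ _) _.
      rewrite le_eqVlt; apply/orP; left; apply/eqP/eq_bigr => i _; rewrite normc_term //.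
    apply: (le_lt_trans h1); rewrite /f (bigD1 i0) //= [X in _ < X](bigD1 i0) //=.
    apply: ltr_leD.
    + have hd := Hd i0 hi0.
      have hn : 0 < nw i0 by rewrite lt0r hi0 nw0.
      have hb : 0 < b ^+ 2 by rewrite sqr_pos.
      have hp : 0 < (d i0 - a) ^+ 2 by rewrite sqr_pos // subr_eq0 gt_eqF.
      rewrite ltr_pM2l // ltf_pV2 ?posrE //; first by lra.
      by apply: addr_gt0.
    + apply: ler_sum => i _; case: (eqVneq (nw i) 0) => [->|hi]; first by rewrite !mul0r.
      have hd := Hd i hi.
      have hp : 0 < (d i - a) ^+ 2 by rewrite sqr_pos // subr_eq0 gt_eqF.
      rewrite ler_wpM2l // lef_pV2 ?posrE //; last by rewrite ltr_wpDr ?sqr_ge0.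
      by rewrite lerDl sqr_ge0.
  - rewrite negb_imply -leNgt => /andP [hi1 hd1].
    case: (@arg_minP _ _ _ i1 (fun i => nw i != 0) d hi1) => im Pim Hmin.
    have hn : 0 < nw im by rewrite lt0r Pim nw0.
    pose de := Num.min 1 (nw im / 2).
    have de0 : 0 < de by rewrite lt_min ltr01 divr_gt0.
    have de1 : de <= 1 by rewrite ge_min lexx.
    have de2 : de <= nw im / 2 by rewrite ge_min lexx orbT.
    exists (d im - de); split.
      by have := Hmin i1 hi1; lra.
    split.
      by move=> i hi; have := Hmin i hi; lra.
    rewrite /f (bigD1 im) //= (_ : d im - (d im - de) = de); last by ring.
    apply: (@lt_le_trans _ _ (nw im / de ^+ 2)); last first.
      by rewrite lerDl sumr_ge0 // => i _; rewrite divr_ge0 ?nw0 ?sqr_ge0.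
    rewrite ltr_pdivlMr ?exprn_gt0 // mul1r.
    have : de ^+ 2 <= de by rewrite expr2 ler_piMr // ltW.
    by lra.
have [W [W0 WE]] : exists W, 0 <= W /\ \sum_i nw i = W.
  by exists (\sum_i nw i); split => //; apply: sumr_ge0 => i _.
pose t0 := t1 - (W + 1).
have f0 : f t0 < 1.
  have h : f t0 <= W / (W + 1) ^+ 2.
    rewrite /f -WE mulr_suml; apply: ler_sum => i _.
    case: (eqVneq (nw i) 0) => [->|hi]; first by rewrite !mul0r.
    have hd := t1d i hi.
    rewrite WE ler_wpM2l ?nw0 // lef_pV2 ?posrE ?exprn_gt0 //; last 2 first.
    - by rewrite /t0; lra.
    - by lra.
    rewrite ler_sqr ?nnegrE; last 2 first.
    - by lra.
    - by rewrite /t0; lra.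
    by rewrite /t0; lra.
  apply: (le_lt_trans h); rewrite ltr_pdivrMr; last by apply: exprn_gt0; lra.
  by rewrite mul1r; nra.
pose Pr := fun j => nw j != 0.
pose pi t := \prod_(j | Pr j) (t - d j) ^+ 2.
pose q := \sum_i nw i *: \prod_(j | Pr j && (j != i)) ('X - (d j)%:P) ^+ 2
          - \prod_(j | Pr j) ('X - (d j)%:P) ^+ 2.
have pi_pos : forall t, (forall j, Pr j -> t < d j) -> 0 < pi t.
  move=> t ht; apply: prodr_gt0 => j hj; rewrite sqr_pos //.
  by rewrite subr_eq0 lt_eqF // ht.
have qE : forall t, (forall j, Pr j -> t < d j) -> q.[t] = pi t * (f t - 1).
  move=> t ht; rewrite /q hornerD hornerN horner_sum horner_prod mulrBr mulr1.
  congr (_ - _); last by apply: eq_bigr => j _; rewrite horner_exp hornerXsubC.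
  rewrite /f mulr_sumr; apply: eq_bigr => i _.
  rewrite hornerZ horner_prod.
  case: (eqVneq (nw i) 0) => [->|hi]; first by rewrite !mul0r mulr0.
  rewrite (eq_bigr (fun j => (t - d j)^+2)); last by move=> j _; rewrite horner_exp hornerXsubC.
  rewrite /pi [in RHS](bigD1 i) //=.
  have e : (t - d i)^+2 = (d i - t)^+2 by rewrite -sqrrN opprB.
  have ne : (d i - t)^+2 != 0 by rewrite expf_eq0 /= subr_eq0 gt_eqF // ht.
  rewrite e; field.
  by move: ne; rewrite expf_eq0.
have hq0 : q.[t0] <= 0.
  rewrite qE; last by move=> j hj; have := t1d j hj; rewrite /t0; lra.
  rewrite pmulr_rle0 ?subr_le0 ?ltW // pi_pos // => j hj.
  by have := t1d j hj; rewrite /t0; lra.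
have hq1 : 0 <= q.[t1].
  rewrite qE // pmulr_rge0 ?subr_ge0 ?ltW // pi_pos //.
have t01 : t0 <= t1 by rewrite /t0; lra.
have [t /andP [ht0 ht1] rt] := poly_ivt t01 (introT andP (conj hq0 hq1)).
have htd : forall j, Pr j -> t < d j by move=> j hj; apply: le_lt_trans ht1 (t1d j hj).
exists t; split; first by apply: le_trans t1a.
split; first by [].
move: rt; rewrite /root qE // mulf_eq0 (gt_eqF (pi_pos t htd)) /= subr_eq0.
by move/eqP.
Qed.

Local Open Scope sesquilinear_scope.

Lemma conjCE (x : R[i]) : x^* = (x^*)%C.
Proof. reflexivity. Qed.

Lemma conj_cp (x : R) : (cp x)^* = cp x.
Proof. by rewrite conjCE conjc_real. Qed.

Lemma map_cp_tc p q (M : 'M[R]_(p,q)) : (map_mx cp M)^t* = map_mx cp M^T.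
Proof. by apply/matrixP => i j; rewrite !mxE conj_cp. Qed.

Lemma cp_real (x : R) : cp x \is Num.real.
Proof. by rewrite complex_real. Qed.

Lemma mapQm n (Sr : 'M[R]_n) (g : 'cV[R]_n) (s : R) :
  map_mx cp ((Sr - s%:M) *m (Sr - s%:M) - g *m g^T) =
  (map_mx cp Sr - (cp s)%:M) *m (map_mx cp Sr - (cp s)%:M) - map_mx cp g *m map_mx cp g^T.
Proof. by rewrite map_mxB !map_mxM map_mxB map_scalar_mx. Qed.

Lemma core (n : nat) (Sr : 'M[R]_n) (g : 'cV[R]_n) (hS : Sr^T = Sr) (hg : g != 0)
  (mu : R[i]) (z : 'cV[R[i]]_n) :
  z != 0 ->
  (map_mx cp Sr - mu%:M) *m (map_mx cp Sr - mu%:M) *m z =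
     map_mx cp g *m (map_mx cp g^T *m z) ->
  exists t : R, t <= complex.Re mu /\
    exists2 x : 'cV[R]_n, x != 0 & ((Sr - t%:M) *m (Sr - t%:M) - g *m g^T) *m x = 0.
Proof.
move=> z0 hz.
pose Sc := map_mx cp Sr.
have mapH : forall s : R, map_mx cp ((Sr - s%:M) *m (Sr - s%:M) - g *m g^T) =
    (Sc - (cp s)%:M) *m (Sc - (cp s)%:M) - map_mx cp g *m map_mx cp g^T.
  by move=> s; rewrite map_mxB !map_mxM map_mxB map_scalar_mx.
case: mu hz => a b hz /=.
case: (eqVneq b 0) => [b0 | b0].
  exists a; split => //; apply: (@real_kernel _ _ _ _ z0).
  subst b; have e : (a +i* 0)%C = cp a by [].
  rewrite e in hz.
  by rewrite mapH mulmxBl -(mulmxA (map_mx cp g)) -hz subrr.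
have Sc_herm : Sc \is hermsymmx.
  apply: realsym_hermsym.
    apply/is_hermitianmxP; rewrite expr0 scale1r map_mx_id //.
    by rewrite /Sc map_trmx hS.
  by apply/mxOverP => i j; rewrite mxE cp_real.
set U := spectralmx Sc; set sp := spectral_diag Sc.
have hU : U \is unitarymx := spectral_unitarymx Sc.
have hUU : U *m U^t* = 1%:M by apply/unitarymxP.
have hUi : invmx U = U^t* := invmx_unitary hU.
have hUU' : U^t* *m U = 1%:M by rewrite -hUi mulVmx // unitarymx_unit.
have eqS : Sc = U^t* *m diag_mx sp *m U.
  by rewrite -hUi; apply/orthomx_spectralP/hermitian_normalmx.
have spr : forall k, sp 0 k = cp (complex.Re (sp 0 k)).
  move=> k; rewrite RRe_real //.
  by have /mxOverP := hermitian_spectral_diag_real Sc_herm; apply.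
have UK : forall (s : R[i]) (v : 'cV_n),
    U *m ((Sc - s%:M) *m v) = \col_k ((sp 0 k - s) * (U *m v) k 0).
  move=> s v; rewrite mulmxA mulmxBr {1}eqS !mulmxA hUU mul1mx mul_mx_scalar.
  rewrite mulmxBl -mulmxA mul_diag_mx -scalemxAl.
  by apply/matrixP => k j; rewrite !mxE ord1 mulrBl.
have UK2 : forall (s : R[i]) (v : 'cV_n),
    U *m ((Sc - s%:M) *m (Sc - s%:M) *m v) = \col_k ((sp 0 k - s)^+2 * (U *m v) k 0).
  move=> s v; rewrite -mulmxA !UK.
  by apply/matrixP => k j; rewrite !mxE mulrA expr2.
pose ze := U *m z; pose om := U *m map_mx cp g; pose c := (map_mx cp g^T *m z) 0 0.
have hk : forall k, (sp 0 k - (a +i* b)%C)^+2 * ze k 0 = c * om k 0.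
  move=> k; have := congr1 (fun M => (U *m M) k 0) hz; rewrite /= UK2 mxE => ->.
  by rewrite [map_mx cp g^T *m z]mx11_scalar mul_mx_scalar -scalemxAr mxE.
have gU : map_mx cp g = U^t* *m om by rewrite /om mulmxA hUU' mul1mx.
have zU : z = U^t* *m ze by rewrite /ze mulmxA hUU' mul1mx.
have cEv : forall v : 'cV_n, (map_mx cp g^T *m (U^t* *m v)) 0 0 = \sum_k (om k 0)^* * v k 0.
  move=> v; rewrite -map_cp_tc gU trmx_mul map_mxM trmxCK !mulmxA -(mulmxA _ U) hUU mulmx1.
  by rewrite mxE; apply: eq_bigr => k _; rewrite !mxE.
have cE : c = \sum_k (om k 0)^* * ze k 0 by rewrite /c {1}zU cEv.
pose nw k := complex.Re (om k 0) ^+ 2 + complex.Im (om k 0) ^+ 2.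
have nwE : forall k, (om k 0)^* * om k 0 = cp (nw k).
  move=> k; rewrite conjCE /nw; case: (om k 0) => x y /=.
  by apply/eqP; rewrite eq_complex /=; apply/andP; split; apply/eqP; ring.
have nw0 : forall k, 0 <= nw k by move=> k; rewrite addr_ge0 ?sqr_ge0.
have nwz : forall k, (nw k == 0) = (om k 0 == 0).
  move=> k; rewrite /nw paddr_eq0 ?sqr_ge0 // !sqrf_eq0.
  by case: (om k 0) => x y; rewrite eq_complex.
have om0 : om != 0.
  apply/eqP => h; move: hg; rewrite -(map_mx_eq0 cp) gU h mulmx0 eqxx //.
have [k0 hk0] : exists k, nw k != 0.
  apply/existsP; move: om0; apply: contraNT; rewrite negb_exists => /forallP H.
  apply/eqP/matrixP => k j; rewrite (ord1 j) [in RHS]mxE; apply/eqP.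
  by rewrite -nwz; move: (H k); rewrite negbK.
have dmu : forall k, sp 0 k - (a +i* b)%C != 0.
  move=> k; rewrite spr; apply/eqP => h.
  have := congr1 (@complex.Im R) h => /= /eqP; rewrite add0r oppr_eq0.
  by rewrite (negPf b0).
have c0 : c != 0.
  apply/eqP => c0'; apply: (negP z0).
  have ze0 : ze = 0.
    apply/matrixP => k j; rewrite (ord1 j) [in RHS]mxE; have := hk k; rewrite c0' mul0r.
    move/eqP; rewrite mulf_eq0 expf_eq0 (negPf (dmu k)) /=.
    by move/eqP.
  by rewrite zU ze0 mulmx0.
have hsum : \sum_k cp (nw k) / (cp (complex.Re (sp 0 k)) - (a +i* b)%C)^+2 = 1.
  have h1 : c * 1 = c * \sum_k cp (nw k) / (cp (complex.Re (sp 0 k)) - (a +i* b)%C)^+2.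
    rewrite mulr1 {1}cE mulr_sumr; apply: eq_bigr => k _.
    have hze : ze k 0 = c * om k 0 / (sp 0 k - (a +i* b)%C)^+2.
      by rewrite -hk; field; rewrite dmu.
    rewrite hze -spr -nwE.
    have := dmu k; move: (sp 0 k - (a +i* b)%C) => q hq.
    by field.
  by apply/esym/(mulfI c0).
have [t [ta [td ft]]] := @secular _ (fun k => complex.Re (sp 0 k)) nw a b nw0 (ex_intro _ k0 hk0) b0 hsum.
exists t; split => //.
pose xi : 'cV_n := \col_k (om k 0 / (sp 0 k - cp t)^+2).
pose xc := U^t* *m xi.
have xiE : forall k, xi k 0 = om k 0 / (sp 0 k - cp t)^+2 by move=> k; rewrite /xi mxE.
have Uxc : U *m xc = xi by rewrite /xc mulmxA hUU mul1mx.
have spt : forall k, nw k != 0 -> sp 0 k - cp t != 0.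
  move=> k hk'; rewrite spr -rmorphB /= fmorph_eq0 subr_eq0 gt_eqF //.
  exact: td.
apply: (@real_kernel _ _ _ xc).
  apply/eqP => h.
  have : xi k0 0 = 0 by rewrite -Uxc h mulmx0 mxE.
  rewrite mxE => /eqP; rewrite mulf_eq0 invr_eq0 expf_eq0 /= (negPf (spt _ hk0)) orbF.
  by rewrite -nwz (negPf hk0).
have c1 : (map_mx cp g^T *m xc) 0 0 = 1.
  rewrite /xc cEv.
  have -> : 1 = cp (\sum_k nw k / (complex.Re (sp 0 k) - t) ^+ 2) by rewrite ft.
  rewrite rmorph_sum; apply: eq_bigr => k _.
  rewrite xiE mulrA nwE rmorphM /= fmorphV /= rmorphXn /= rmorphB /= -spr.
  by [].
rewrite mapH.
have Ui : forall v : 'cV_n, U *m v = 0 -> v = 0.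
  by move=> v hv; rewrite -[v]mul1mx -hUU' -mulmxA hv mulmx0.
apply: Ui.
rewrite mulmxBl mulmxBr UK2 Uxc -mulmxA [map_mx cp g^T *m xc]mx11_scalar c1.
rewrite mul_mx_scalar scale1r.
apply/matrixP => k j; rewrite (ord1 j) !mxE.
case: (eqVneq (nw k) 0) => [hk'|hk'].
  move/eqP: hk'; rewrite nwz => /eqP hom.
  have hom' : (U *m map_mx cp g) k 0 = 0 := hom.
  by rewrite mxE in hom'; rewrite hom' mul0r mulr0 subrr.
have := spt k hk'; move: (sp 0 k - cp t) => q hq.
by field.
Qed.
End S4.

Local Open Scope sesquilinear_scope.

Theorem theorem2p10 (R : rcfType) (n m : nat)
  (A : 'M[R]_n) (C : 'M[R]_(n, m)) (b : 'cV[R]_m)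
  (hA : A^T = A) (hmn : (m < n)%N) (hC : \rank C = m)
  (hn0 : sqnorm (n0 C b) < 1) (hb0 : b0 A C b != 0)
  (lam : R) (z : 'cV[R]_n) :
  QEPmin_minimizer A C b lam z ->
  QEP_eig_in_ker A C b (lam%:C)%C /\
  (forall mu : R[i], QEP_eig_in_ker A C b mu -> lam <= complex.Re mu).
Proof.
move=> [[z0 Cz Qz] Hmin].
pose cp := real_complex R.
pose P := Pmx C.
pose g := (gamma C b)^-1 *: b0 A C b.
have gam0 : 0 < gamma C b by apply: gamma_gt0.
have hPs : P^T = P by apply: P_sym.
have hPP : P *m P = P by apply: PP.
have hPg : P *m g = g by rewrite /g -scalemxAr (Pb0 _ _ _ _ _ _ hC).
have QE : forall t, QEPmx A C b t = Qm _ _ A P g t.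
  by move=> t; rewrite /QEPmx /Qm /S gg_eq.
have mapQ : forall mu : R[i], QEPmxC A C b mu =
    (map_mx cp (S _ _ A P) - mu%:M) *m (map_mx cp (S _ _ A P) - mu%:M)
      - map_mx cp g *m map_mx cp g^T.
  move=> mu; rewrite /QEPmxC /S -/cp -/P; congr (_ - _).
  rewrite -map_mxM /g -gg_eq map_mxZ /=.
  by rewrite fmorphV rmorphXn.
split.
  exists (map_mx cp z); split.
  - by rewrite map_mx_eq0.
  - by rewrite -map_mxM Cz map_mx0.
  - have -> : QEPmxC A C b (cp lam) = map_mx cp (QEPmx A C b lam).
      by rewrite mapQ QE /Qm mapQm.
    by rewrite -map_mxM Qz map_mx0.
move=> mu [zc [zc0 Czc Qzc]].
have PW : map_mx cp P *m zc = zc.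
  rewrite /P /Pmx map_mxB map_mx1 mulmxBl mul1mx !map_mxM -!mulmxA.
  by rewrite -/cp Czc !mulmx0 subr0.
pose N := complex.Re mu + 1.
have SpWc : forall y : 'cV[R[i]]_n, map_mx cp P *m y = y ->
    map_mx cp (Sp _ _ A P N) *m y = map_mx cp (S _ _ A P) *m y.
  move=> y hy; rewrite /Sp map_mxD map_mxZ map_mxB map_mx1 mulmxDl -scalemxAl mulmxBl.
  by rewrite mul1mx hy subrr scaler0 addr0.
have PSc : map_mx cp P *m ((map_mx cp (S _ _ A P) - mu%:M) *m zc) =
           (map_mx cp (S _ _ A P) - mu%:M) *m zc.
  rewrite mulmxA mulmxBr -map_mxM (PS _ _ _ _ hPP) mul_mx_scalar mulmxBl -scalemxAl PW.
  by rewrite mulmxBl mul_scalar_mx.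
have hg : g != 0.
  by rewrite /g scaler_eq0 invr_eq0 negb_or (gt_eqF gam0) hb0.
have heq : (map_mx cp (Sp _ _ A P N) - mu%:M) *m (map_mx cp (Sp _ _ A P N) - mu%:M) *m zc =
     map_mx cp g *m (map_mx cp g^T *m zc).
  rewrite -mulmxA (mulmxBl (map_mx cp (Sp _ _ A P N)) (mu%:M) zc) (SpWc _ PW) -mulmxBl.
  rewrite (mulmxBl (map_mx cp (Sp _ _ A P N)) (mu%:M) (_ *m zc)) (SpWc _ PSc) -mulmxBl mulmxA.
  by apply/eqP; rewrite -subr_eq0 mulmxA -mulmxBl -mapQ Qzc.
have [t [tmu [x x0 hx]]] := core _ _ _ _ (Sp_sym _ _ _ _ hA hPs N) hg _ _ zc0 heq.
have tN : t != N by rewrite /N; apply/negP => /eqP ht; move: tmu; rewrite ht; lra.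
have Px : P *m x = x.
  by apply: (Hp_ker _ _ A P g hPP hPg N t _ x tN).
apply: (le_trans _ tmu); apply: (Hmin t x); split => //.
  exact: (ker_P _ _ _ C hC).
by rewrite QE -(HpW _ _ A P g hPP N t _ x Px).
Qed.
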